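(* Let $A$ be an aperiodic binary sequence of length $n\ge 2$. Then every binary $k'$-stage machine that generates $A$ satisfies $k'\ge k$, where \[ k=\max\bigl(\lceil \log_2 wt(A)\rceil,\ \lceil \log_2 (n-wt(A))\rceil\bigr)+1 . \] Consequently (together with the existence of a generating binary $k$-stage machine) $k$ is exactly the minimum number of stages of a binary machine generating $A$.
   Context: A binary sequence of length $n$ is an $n$-tuple $A=(a_0,\ldots,a_{n-1})\in\{0,1\}^n$; its Hamming weight $wt(A)$ is the number of 1s. $A$ is called aperiodic if it is not of the form $B B\cdots B$ ($m\ge 2$ copies) for a shorter binary sequence $B$. A binary $k$-stage machine consists of $k$ stages $0,1,\ldots,k-1$, each holding one bit; its state is the vector $(x_{k-1},\ldots,x_1,x_0)\in\{0,1\}^k$. Each stage $j$ has its own arbitrary Boolean next-state function $f_j:\{0,1\}^k\to\{0,1\}$ (arbitrary feedback and feedforward dependencies allowed), and at each clock step the state $x$ is replaced by $(f_{k-1}(x),\ldots,f_0(x))$. The output at each time step is the content of stage $0$. The machine generates $A$ if for some initial state the output sequence is the periodic sequence $a_0,a_1,\ldots,a_{n-1},a_0,a_1,\ldots$. *)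

(* Defs.v *)
From mathcomp Require Import all_boot.
Set Implicit Arguments. Unset Strict Implicit. Unset Printing Implicit Defensive.

Definition wt (A : seq bool) : nat := count id A.

Definition aperiodic (A : seq bool) : Prop :=
  ~ exists (B : seq bool) (m : nat), 2 <= m /\ A = flatten (nseq m B).

Definition state (k : nat) := {ffun 'I_k -> bool}.

Definition machine (k : nat) := 'I_k -> state k -> bool.

Definition step (k : nat) (f : machine k) (x : state k) : state k :=
  [ffun j => f j x].

(* f generates A if for some initial state the output (content of stage 0)
   is the periodic sequence a_0, ..., a_{n-1}, a_0, ... *)
Definition generates (k : nat) (f : machine k) (A : seq bool) : Prop :=
  exists (H : 0 < k) (x0 : state k),
    forall t : nat, iter t (step f) x0 (Ordinal H) = nth false A (t %% size A).

(* ceil(log2 m) for m >= 1: smallest e with m <= 2^e (up_log from prime.v). *)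
Definition clog2 (m : nat) : nat := up_log 2 m.

Definition min_stages (A : seq bool) : nat :=
  maxn (clog2 (wt A)) (clog2 (size A - wt A)) + 1.

(* Main.v *)
Require Import Defs.
From mathcomp Require Import all_boot.

Lemma card_count (s : seq bool) (p : pred bool) :
  #|[pred i : 'I_(size s) | p (nth false s i)]| = count p s.
Proof.
rewrite -sum1_card.
have -> : \sum_(i in [pred i : 'I_(size s) | p (nth false s i)]) 1
   = \sum_(i < size s | p (nth false s i)) 1 by apply: eq_bigl.
rewrite -(big_mkord (fun i => p (nth false s i)) (fun _ => 1)).
rewrite /index_iota subn0 sum1_count.
by rewrite -[in RHS](mkseq_nth false s) /mkseq count_map.
Qed.


Lemma size_flat (B : seq bool) m : size (flatten (nseq m B)) = m * size B.
Proof. by elim: m => //= m IH; rewrite size_cat IH mulSn. Qed.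

Lemma flat_nth (B : seq bool) m i : 0 < size B ->
  nth false (flatten (nseq m B)) i = nth false B (i %% size B) \/ m * size B <= i.
Proof.
move=> B0; elim: m i => [|m IH] i /=; first by right.
rewrite nth_cat; case: ltnP => Hi; first by left; rewrite modn_small.
have [E|E] := IH (i - size B); [left|right].
  by rewrite E -{2}(subnK Hi) modnDr.
by rewrite mulSn -leq_subRL.
Qed.

Lemma rot_periodic (A : seq bool) d : 0 < d < size A ->
  (forall i, nth false A ((i + d) %% size A) = nth false A (i %% size A)) ->
  ~ aperiodic A.
Proof.
set n := size A => /andP[d0 dn] Hp; apply.
have Hj : forall j i, nth false A ((i + d * j) %% n) = nth false A (i %% n).
  elim=> [|j IH] i; first by rewrite muln0 addn0.
  by rewrite mulnS addnA IH Hp.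
have n0 : 0 < n by apply: leq_trans dn.
pose g := gcdn d n.
have Hg : forall i, nth false A ((i + g) %% n) = nth false A (i %% n).
  move=> i; have := egcdnP n d0; case: (egcdn d n) => a b; case=> km kn E _.
  by rewrite -(Hj km i) (mulnC d) E addnCA modnMDl.
have g0 : 0 < g by rewrite gcdn_gt0 d0.
have gn : g < n by apply: leq_ltn_trans dn; apply: dvdn_leq => //; apply: dvdn_gcdl.
have gdn : g %| n by apply: dvdn_gcdr.
have Hq : forall q r, r < g -> q * g + r < n -> nth false A (q * g + r) = nth false A r.
  elim=> [|q IH] r rg; first by rewrite mul0n.
  move=> H; have H' : q * g + r < n by apply: leq_ltn_trans H; rewrite leq_add2r leq_mul2r leqnSn orbT.
  by rewrite -(modn_small H) mulSn -addnA addnC Hg (modn_small H') IH.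
exists (take g A), (n %/ g); split.
  by rewrite ltn_divRL // mul1n.
have sB : size (take g A) = g by rewrite size_takel // ltnW.
apply: (@eq_from_nth _ false); first by rewrite size_flat sB divnK.
move=> i Hi; have [E|E] := @flat_nth (take g A) (n %/ g) i (ltac:(by rewrite sB) : 0 < size (take g A)).
  rewrite E sB nth_take ?ltn_pmod // {1}(divn_eq i g) Hq ?ltn_pmod //.
  by rewrite -divn_eq.
by move: E; rewrite sB divnK // leqNgt Hi.
Qed.

From Stdlib Require Import Lia.

Lemma lower (A : seq bool) k' (f : machine k') :
  aperiodic A -> generates f A -> min_stages A <= k'.
Proof.
move=> ap [H [x0 Hx]]; set n := size A.
case: k' f H x0 Hx => [|k] f H x0 Hx; first by [].
pose x t := iter t (step f) x0.
have E0 : Ordinal H = ord0 by apply: val_inj.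
have Hout t : x t ord0 = nth false A (t %% n) by rewrite /x -E0 Hx.
have key : forall a b, a < b -> b < n -> x a <> x b.
  move=> a b ab bn E; apply: (@rot_periodic A (b - a)) ap.
    by rewrite subn_gt0 ab /=; apply: leq_ltn_trans (leq_subr _ _) bn.
  move=> i.
  have Hs s : x (s + a) = x (s + b) by rewrite /x !iterD -/(x a) -/(x b) E.
  have := congr1 (fun F : state k.+1 => F ord0) (Hs (i + (n - a))); rewrite !Hout.
  have -> : i + (n - a) + a = i + n.
    move/ltP: ab => ab; move/ltP: bn => bn; rewrite -!plusE -!minusE; lia.
  have -> : i + (n - a) + b = i + (b - a) + n.
    move/ltP: ab => ab; move/ltP: bn => bn; rewrite -!plusE -!minusE; lia.
  by rewrite !modnDr => ->.
have cb : forall b : bool, count (pred1 b) A <= 2 ^ k.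
  move=> b; rewrite -card_count.
  pose phi (t : 'I_n) : state k := [ffun j => x t (lift ord0 j)].
  have -> : 2 ^ k = #|state k| by rewrite card_ffun card_bool card_ord.
  apply: (@leq_card_in _ _ phi) => s t; rewrite !inE => /eqP Hs /eqP Ht E.
  have Ex : x s = x t.
    apply/ffunP => j; case: (unliftP ord0 j) => [j' ->|->].
      by have := congr1 (fun F : state k => F j') E; rewrite !ffunE.
    by rewrite !Hout !modn_small // Hs Ht.
  apply: val_inj; case: (ltngtP s t) => // st.
    by case: (key _ _ st (ltn_ord t) Ex).
  by case: (key _ _ st (ltn_ord s) (esym Ex)).
have w1 : wt A = count (pred1 true) A by apply: eq_count => c; case: c.
have w0 : n - wt A = count (pred1 false) A.
  rewrite /n -(count_predC id A) /wt addKn; apply: eq_count => c; by case: c.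
rewrite /min_stages addn1 ltnS geq_max /clog2 -/n w0 w1.
by rewrite !up_log_min.
Qed.

Lemma construct (A : seq bool) k (g : 'I_(size A) -> state k) (H : 0 < k) :
  0 < size A -> injective g -> (forall t, g t (Ordinal H) = nth false A t) ->
  exists f : machine k, generates f A.
Proof.
move=> n0 ginj gA.
pose next (x : state k) : state k :=
  if [pick t | g t == x] is Some t then g (ordS t) else x.
exists (fun j x => next x j).
have stepE x : step (fun j x => next x j) x = next x by apply/ffunP => j; rewrite ffunE.
have nextE t : next (g t) = g (ordS t).
  rewrite /next; case: pickP => [t' /eqP /ginj -> //|N].
  by have := N t; rewrite eqxx.
exists H, (g (Ordinal (ltn_pmod 0 n0))) => t.
suff -> : iter t (step (fun j x => next x j)) (g (Ordinal (ltn_pmod 0 n0)))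
   = g (Ordinal (ltn_pmod t n0)) by rewrite gA.
elim: t => [|t IH]; first by congr g; apply: val_inj.
rewrite iterS IH stepE nextE; congr g; apply: val_inj => /=.
by rewrite -addn1 modnDml addn1.
Qed.

Lemma cmono (A : seq bool) s t : s < t -> t <= size A ->
  count (pred1 (nth false A s)) (take s A) < count (pred1 (nth false A s)) (take t A).
Proof.
move=> st tn; rewrite -(subnKC (ltnW st)) takeD count_cat.
rewrite -[X in X < _]addn0 ltn_add2l (drop_nth false); last by apply: leq_trans st tn.
move: (st); rewrite -subn_gt0; by case: (t - s) => [|j] // _ /=; rewrite eqxx.
Qed.

Lemma upper (A : seq bool) : 0 < size A -> exists f : machine (min_stages A), generates f A.
Proof.
move=> n0; rewrite /min_stages addn1; set m := maxn _ _.
pose c (t : nat) := count (pred1 (nth false A t)) (take t A).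
have w1 : wt A = count (pred1 true) A by apply: eq_count => x; case: x.
have w0 : size A - wt A = count (pred1 false) A.
  rewrite -(count_predC id A) /wt addKn; apply: eq_count => x; by case: x.
have cb (t : 'I_(size A)) : c t < #|state m|.
  rewrite card_ffun card_bool card_ord.
  apply: (@leq_trans (count (pred1 (nth false A t)) A)).
    rewrite /c -[X in _ < count _ X](cat_take_drop t A) count_cat (drop_nth false (ltn_ord t)).
    by rewrite -[X in X < _]addn0 ltn_add2l /= eqxx.
  case: (nth false A t).
    rewrite -w1; apply: leq_trans (@up_logP 2 _ _) _ => //; rewrite leq_exp2l //; exact: leq_maxl.
  rewrite -w0; apply: leq_trans (@up_logP 2 _ _) _ => //; rewrite leq_exp2l //; exact: leq_maxr.
pose enc (t : 'I_(size A)) : state m := enum_val (Ordinal (cb t)).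
pose g t : state m.+1 :=
  [ffun j => if unlift ord0 j is Some j' then enc t j' else nth false A t].
have E0 : Ordinal (ltn0Sn m) = ord0 by apply: val_inj.
apply: (@construct A m.+1 g (ltn0Sn m) n0).
  move=> s t E.
  have Hb : nth false A s = nth false A t.
    by have := congr1 (fun F : state m.+1 => F ord0) E; rewrite !ffunE unlift_none.
  have : enc s = enc t.
    apply/ffunP => j.
    by have := congr1 (fun F : state m.+1 => F (lift ord0 j)) E; rewrite !ffunE liftK.
  move/enum_val_inj => /(congr1 val) /= Ec.
  apply: val_inj; case: (ltngtP s t) => // st.
    by have := @cmono A s t st (ltnW (ltn_ord t)); rewrite -/(c s) Hb -/(c t) Ec ltnn.
  by have := @cmono A t s st (ltnW (ltn_ord s)); rewrite -/(c t) -Hb -/(c s) Ec ltnn.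
by move=> t; rewrite ffunE E0 unlift_none.
Qed.

Theorem theorem2 (A : seq bool) :
  2 <= size A -> aperiodic A ->
  (forall (k' : nat) (f : machine k'), generates f A -> min_stages A <= k') /\
  (exists f : machine (min_stages A), generates f A).
Proof.
move=> n2 ap; split; first by move=> k' f; apply: lower.
by apply: upper; apply: leq_trans n2.
Qed.
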